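(* Let $G$ be a finite, simple, undirected, connected graph that is $C_4$-free, has order $n$, diameter $d$, and edge-connectivity $\lambda\geq 4$. Then $$d\leq \frac{n-3}{3}.$$
   Context: A graph is $C_4$-free if it contains no cycle of length four as a (not necessarily induced) subgraph. The edge-connectivity of a connected graph is the minimum number of edges whose removal disconnects it. *)

(* Defs.v *)
(* A finite simple undirected graph is a symmetric,
   irreflexive relation e on a finType T (vertices = T). *)
From mathcomp Require Import all_boot all_order all_algebra.
Set Implicit Arguments. Unset Strict Implicit. Unset Printing Implicit Defensive.

Section Graphs.
Variable T : finType.

Definition gconnected (e : rel T) : bool :=
  (0 < #|T|) && [forall x, [forall y, connect e x y]].

Definition edgeset (e : rel T) : {set {set T}} :=
  [set [set x; y] | x in T, y in T & e x y].

Definition remove_edges (e : rel T) (F : {set {set T}}) : rel T :=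
  fun x y => e x y && ([set x; y] \notin F).

(* edge-connectivity: minimum number of edges whose removal disconnects
   the graph (0 for graphs with at most one vertex) *)
Definition edge_connectivity (e : rel T) : nat :=
  if #|T| <= 1 then 0 else
  \big[minn/#|T|]_(F : {set {set T}} |
        (F \subset edgeset e) && ~~ gconnected (remove_edges e F)) #|F|.

(* graph distance: length of a shortest walk (walks of length < #|T|
   suffice in a connected graph) *)
Definition gdist (e : rel T) (x y : T) : nat :=
  \big[minn/#|T|]_(k < #|T| |
       [exists p : k.-tuple T, path e x p && (last x p == y)]) (k : nat).

Definition diameter (e : rel T) : nat := \max_(x : T) \max_(y : T) gdist e x y.

(* no (not necessarily induced) 4-cycle *)
Definition C4_free (e : rel T) : Prop :=
  forall a b c d : T, uniq [:: a; b; c; d] ->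
    ~ [&& e a b, e b c, e c d & e d a].

End Graphs.

(* Main.v *)
Require Import Defs.
From mathcomp Require Import all_boot all_order all_algebra.
From mathcomp Require Import zify.
Import Order.TTheory GRing.Theory Num.Theory.
Set Implicit Arguments. Unset Strict Implicit. Unset Printing Implicit Defensive.

Lemma bigmin_le (I : finType) (P : pred I) (F : I -> nat) a j :
  P j -> \big[minn/a]_(i | P i) F i <= F j.
Proof.
move=> Pj; rewrite unlock /reducebig.
have : j \in index_enum I by rewrite mem_index_enum.
elim: (index_enum I) => //= i r IH; rewrite inE; case/orP => [/eqP<-|/IH H].
  by rewrite Pj geq_minl.
by case: (P i) => //; rewrite geq_min H orbT.
Qed.

Lemma bigmin_cases (I : finType) (P : pred I) (F : I -> nat) a :
  \big[minn/a]_(i | P i) F i = a \/ exists2 i, P i & \big[minn/a]_(i | P i) F i = F i.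
Proof.
apply: (big_ind (fun x => x = a \/ exists2 i, P i & x = F i)); first by left.
  move=> x y Hx Hy; rewrite /minn; case: ifP => _ //.


by move=> i Pi; right; exists i.
Qed.
Section Dist.
Variable T : finType.
Variable e : rel T.
Hypothesis econn : gconnected e.

Definition Pw (x y : T) k := [exists p : k.-tuple T, path e x p && (last x p == y)].

Lemma Pw_intro x y (p : seq T) : path e x p -> last x p = y -> Pw x y (size p).
Proof. by move=> pp lp; apply/existsP; exists (in_tuple p); rewrite /= pp lp eqxx. Qed.

Lemma gdist_le x y k : k < #|T| -> Pw x y k -> gdist e x y <= k.
Proof.
move=> kT Pk; rewrite /gdist.
exact: (@bigmin_le _ (fun k : 'I_#|T| => Pw x y k) (fun k : 'I_#|T| => nat_of_ord k) #|T| (Ordinal kT) Pk).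
Qed.

Lemma gdist_cases x y : gdist e x y = #|T| \/ (gdist e x y < #|T| /\ Pw x y (gdist e x y)).
Proof.
rewrite /gdist; case: (@bigmin_cases _ (fun k : 'I_#|T| => Pw x y k) (fun k : 'I_#|T| => nat_of_ord k) #|T|) => [->|[k Pk ->]]; first by left.
by right; split.
Qed.

Lemma gdist_lt x y : gdist e x y < #|T|.
Proof.
move: econn => /andP[_ /forallP/(_ x)/forallP/(_ y)] /connectP[p pp ->].
case: (shortenP pp) => p' pp' up' _.
have sz : size p' < #|T|.
  by have := card_uniqP up'; move=> H; rewrite -ltnS -[(size p').+1]/(size (x :: p')) -H; exact: max_card.
apply: leq_ltn_trans (gdist_le sz (Pw_intro pp' erefl)) sz.
Qed.

Lemma gdist_P x y : Pw x y (gdist e x y).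
Proof. by case: (gdist_cases x y) => [H|[]//]; have := gdist_lt x y; rewrite H ltnn. Qed.

Lemma gdist_edge x y z : e y z -> gdist e x z <= (gdist e x y).+1.
Proof.
move=> eyz; have /existsP[p /andP[pp /eqP lp]] := gdist_P x y.
have : Pw x z (size (rcons p z)).
  by apply: Pw_intro; rewrite ?last_rcons // rcons_path pp lp eyz.
rewrite size_rcons size_tuple => H.
case: (ltnP (gdist e x y).+1 #|T|) => Hlt; first exact: gdist_le Hlt H.
by apply: leq_trans (ltnW (gdist_lt x z)) Hlt.
Qed.

Lemma gdist_refl x : gdist e x x = 0.
Proof. by apply/eqP; rewrite -leqn0; apply: gdist_le; [apply: leq_ltn_trans (gdist_lt x x)|apply: (@Pw_intro x x [::])]. Qed.

Lemma gdist0 x y : gdist e x y = 0 -> y = x.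
Proof.
move=> H; have := gdist_P x y; rewrite H => /existsP[p /andP[_ /eqP]].
by rewrite tuple0 /= => ->.
Qed.

Lemma gdist_pred x z : 0 < gdist e x z -> exists2 y, e y z & (gdist e x y).+1 = gdist e x z.
Proof.
move=> H; have /existsP[p /andP[pp /eqP lp]] := gdist_P x z.
have sp := size_tuple p.
case/lastP: (tval p) pp lp sp => [|q z'] ; first by move=> _ _ /= S; rewrite -S in H.
rewrite last_rcons rcons_path size_rcons => /andP[pq eq] lz sq; rewrite lz in eq.
exists (last x q) => //.
apply/eqP; rewrite eqn_leq gdist_edge // andbT -sq ltnS.
apply: gdist_le; last exact: Pw_intro.
by rewrite -ltnS sq; apply: leq_trans (gdist_lt x z) (leqnSn _).
Qed.
End Dist.
Lemma card_sum (U : finType) (A : {set U}) : #|A| = \sum_u ((u \in A) : nat).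
Proof. by rewrite -sum1_card big_mkcond; apply: eq_bigr => u _; case: (u \in A). Qed.

Section Cut.
Variable T : finType.
Variable e : rel T.
Hypothesis esym : symmetric e.

Lemma cut4 (X : {set T}) x0 x1 : x0 \in X -> x1 \notin X -> 4 <= edge_connectivity e ->
  4 <= \sum_x \sum_y ((x \in X) && (y \notin X) && e x y).
Proof.
move=> x0X x1X; rewrite /edge_connectivity; case: ifP => // _ H4.
pose C := [set u : T * T | (u.1 \in X) && (u.2 \notin X) && e u.1 u.2].
pose F := [set [set u.1; u.2] | u in C].
have HF : (F \subset edgeset e) && ~~ gconnected (remove_edges e F).
  apply/andP; split.
    apply/subsetP => f /imsetP[u uC ->]; rewrite inE in uC.
    case/andP: uC => /andP[_ _] eu.
    by apply/imset2P; exists u.1 u.2; rewrite ?inE.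
  apply/negP => /andP[_ /forallP/(_ x0)/forallP/(_ x1)] c.
  have cl : closed (remove_edges e F) (mem X).
    move=> a b /andP[eab nF].
    case: (boolP (a \in X)) => aX; case: (boolP (b \in X)) => bX //.
      by case/negP: nF; apply/imsetP; exists (a, b); rewrite ?inE ?aX ?bX.
    case/negP: nF; apply/imsetP; exists (b, a); first by rewrite inE /= aX bX esym eab.
    by rewrite setUC.
  by move: (closed_connect cl c); rewrite x0X (negbTE x1X).
apply: (leq_trans H4); apply: (leq_trans (@bigmin_le _ (fun F0 : {set {set T}} => (F0 \subset edgeset e) && ~~ gconnected (remove_edges e F0)) (fun F0 => #|F0|) #|T| F HF)).
apply: (leq_trans (leq_imset_card _ _)).
rewrite card_sum pair_big /=; apply: leq_sum => u _; by rewrite inE.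
Qed.
End Cut.
Section Count.
Variable T : finType.
Variable e : rel T.
Hypothesis esym : symmetric e.
Hypothesis eirr : irreflexive e.
Hypothesis c4 : C4_free e.

Definition dS (S : {set T}) y := \sum_x ((x \in S) && e y x).

Lemma dS_card S y : dS S y = #|[set x in S | e y x]|.
Proof. by rewrite card_sum; apply: eq_bigr => x _; rewrite inE. Qed.

Lemma pairs_bound (S : {set T}) : \sum_y 'C(dS S y, 2) <= 'C(#|S|, 2).
Proof.
have E1 y : 'C(dS S y, 2) = \sum_(A : {set T}) ((A \subset [set x in S | e y x]) && (#|A| == 2)).
  by rewrite dS_card -cards_draws card_sum; apply: eq_bigr => A _; rewrite inE.
under eq_bigr => y _ do rewrite E1.
rewrite exchange_big /= -cards_draws card_sum; apply: leq_sum => A _.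
rewrite inE.
case: (boolP (#|A| == 2)) => A2; last by rewrite big1 // => y _; rewrite andbF.
under eq_bigr => y _ do rewrite andbT.
case/cards2P: A2 => a [b [ab ->]].
have key : forall y, [set a; b] \subset [set x in S | e y x] -> [&& a \in S, b \in S, e y a & e y b].
  move=> y /subsetP H.
  have := H a; rewrite !inE eqxx => /(_ isT) /andP[-> ->].
  by have := H b; rewrite !inE eqxx orbT => /(_ isT) /andP[-> ->].
case: (boolP ([set a; b] \subset S)) => HS; last first.
  rewrite big1 // => y _; apply/eqP; rewrite eqb0; apply/negP => Hy; have /and4P[aS bS _ _] := key y Hy.
  by case/negP: HS; apply/subsetP => z; rewrite !inE => /orP[/eqP->|/eqP->].
rewrite (eq_bigr (fun y => ((y \in [set y | [set a; b] \subset [set x in S | e y x]]) : nat))); last by move=> y _; rewrite inE.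
rewrite -card_sum; apply/card_le1_eqP => y y'; rewrite !inE => Hy Hy'; have /and4P[_ _ ya yb] := key y Hy; have /and4P[_ _ y'a y'b] := key y' Hy'.
apply/eqP; apply/negPn/negP => ne.
have ay : a != y by apply/eqP => E; move: ya; rewrite E eirr.
have ay' : a != y' by apply/eqP => E; move: y'a; rewrite E eirr.
have yb' : y != b by apply/eqP => E; move: yb; rewrite E eirr.
have by' : b != y' by apply/eqP => E; move: y'b; rewrite E eirr.
apply: (c4 (a:=a) (b:=y) (c:=b) (d:=y')).
  by rewrite /= !inE !negb_or ay ab ay' yb' (eq_sym y y') ne by'.
by rewrite esym ya yb esym y'b y'a.
Qed.
End Count.
Lemma d_le_C d : d <= 1 + 'C(d, 2).
Proof. elim: d => // d IH; rewrite binS bin1; lia. Qed.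

Ltac bcase := repeat match goal with |- context[nat_of_bool ?b] => case: (boolP b) => /=; intro end.

Section Count2.
Variable T : finType.
Variable e : rel T.
Hypothesis esym : symmetric e.
Hypothesis eirr : irreflexive e.
Hypothesis c4 : C4_free e.

Lemma deg_sum (S : {set T}) : \sum_x \sum_y ((x \in S) && e x y) = \sum_y dS e S y.
Proof. by rewrite exchange_big; apply: eq_bigr => y _; apply: eq_bigr => x _; rewrite esym. Qed.

Lemma U_bound (S : {set T}) (U : pred T) :
  \sum_y (U y) * dS e S y <= \sum_y (U y : nat) + 'C(#|S|, 2).
Proof.
apply: (@leq_trans (\sum_y ((U y : nat) + 'C(dS e S y, 2)))).
  apply: leq_sum => y _; case: (U y); rewrite ?mul1n ?mul0n //; exact: d_le_C.
by rewrite big_split /= leq_add2l; apply: pairs_bound.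
Qed.

Lemma deg_ge (S : {set T}) k : (forall x, x \in S -> k <= \sum_y e x y) ->
  k * #|S| <= \sum_y dS e S y.
Proof.
move=> H; rewrite -deg_sum card_sum big_distrr /=; apply: leq_sum => x _.
case: (boolP (x \in S)) => xS; rewrite ?muln0 // muln1.
by apply: (leq_trans (H x xS)); apply: leq_sum => y _.
Qed.
End Count2.
Lemma arith9 s m : 1 <= s -> 2 <= m -> 4 * s <= m + s + 'C(s, 2) -> 8 <= m + 'C(s, 2) -> 9 <= m + s.
Proof.
have c0 : 'C(0,2) = 0 by []. have c1 : 'C(1,2) = 0 by []. have c2 : 'C(2,2) = 1 by [].
have c3 : 'C(3,2) = 3 by []. have c4 : 'C(4,2) = 6 by []. have c5 : 'C(5,2) = 10 by [].
have c6 : 'C(6,2) = 15 by [].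
case: s => [|[|[|[|[|[|[|s]]]]]]]; rewrite ?c0 ?c1 ?c2 ?c3 ?c4 ?c5 ?c6; lia.
Qed.

Section Main.
Variable T : finType.
Variable e : rel T.
Hypothesis esym : symmetric e.
Hypothesis eirr : irreflexive e.
Hypothesis econn : gconnected e.
Hypothesis c4 : C4_free e.
Hypothesis lam : 4 <= edge_connectivity e.
Variable v : T.
Variable d : nat.
Local Notation D := (gdist e v).
Hypothesis Dle : forall y, D y <= d.
Hypothesis Lne : forall j, j <= d -> exists y, D y = j.

Lemma Dedge y z : e y z -> D z <= (D y).+1 /\ D y <= (D z).+1.
Proof. by move=> eyz; split; apply: gdist_edge => //; rewrite esym. Qed.

Lemma n_gt1 : 1 < #|T|.
Proof. by move: lam; rewrite /edge_connectivity; case: ifP => // /negbT; rewrite -ltnNge. Qed.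

Lemma deg4 x : 4 <= \sum_y e x y.
Proof.
case: (pickP (fun y => y != x)) => [x1 Hx1 | H]; last first.
  have : #|T| <= 1.
    apply/card_le1_eqP => a b _ _.
    by have := H a; have := H b; rewrite /= => /negbFE/eqP -> /negbFE/eqP ->.
  by rewrite leqNgt n_gt1.
have := @cut4 T e esym [set x] x x1; rewrite !inE eqxx Hx1 => /(_ isT isT lam) H.
apply: (leq_trans H); rewrite (bigD1 x) //= [X in _ + X]big1 ?addn0.
  by apply: leq_sum => y _; rewrite !inE eqxx /=; case: (e x y); rewrite ?andbT ?andbF ?leq_b1.
by move=> z zx; apply: big1 => y _; rewrite inE (negbTE zx).
Qed.

Lemma cut_up j : j < d -> 4 <= \sum_y \sum_x ((D y == j.+1) && (D x == j) && e y x).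
Proof.
move=> jd; have [w Dw] := Lne (leqnn d).
have := @cut4 T e esym [set z | D z <= j] v w; rewrite !inE (gdist_refl econn) Dw -ltnNge jd.
move=> /(_ isT isT lam) H; apply: (leq_trans H).
rewrite [X in _ <= X]exchange_big; apply: leq_sum => x _; apply: leq_sum => y _; rewrite !inE.
case exy: (e x y); last by rewrite !andbF.
have eyx : e y x by rewrite esym.
rewrite eyx !andbT; have [h1 h2] := Dedge exy.
bcase; lia.
Qed.

Lemma cut_dn j : j < d -> 4 <= \sum_y \sum_x ((D y == j) && (D x == j.+1) && e y x).
Proof.
move=> jd; have [w Dw] := Lne (leqnn d).
have := @cut4 T e esym [set z | D z <= j] v w; rewrite !inE (gdist_refl econn) Dw -ltnNge jd.
move=> /(_ isT isT lam) H; apply: (leq_trans H).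
apply: leq_sum => x _; apply: leq_sum => y _; rewrite !inE.
case exy: (e x y); last by rewrite !andbF.
rewrite !andbT; have [h1 h2] := Dedge exy.
bcase; lia.
Qed.

Lemma layer_ne k : k <= d -> 0 < #|[set y | D y == k]|.
Proof. by move=> kd; have [y Dy] := Lne kd; apply/card_gt0P; exists y; rewrite inE Dy. Qed.

Lemma middle j : 0 < j -> j < d ->
  9 <= #|[set y | D y == j.-1]| + #|[set y | D y == j]| + #|[set y | D y == j.+1]|.
Proof.
move=> j0 jd.
set S := [set y | D y == j].
have H1 : 4 * #|S| <= \sum_y dS e S y by apply: deg_ge => // x _; apply: deg4.
have H2 : \sum_y dS e S y = \sum_y ((j.-1 <= D y) && (D y <= j.+1)) * dS e S y.
  apply: eq_bigr => y _; case: (boolP ((j.-1 <= D y) && (D y <= j.+1))) => U.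
    by rewrite mul1n.
  rewrite mul0n; apply: big1 => x _; rewrite inE.
  case exy: (e y x); last by rewrite andbF.
  have [h1 h2] := Dedge exy; lia.
have H3 := @U_bound _ _ esym eirr c4 S (fun y => (j.-1 <= D y) && (D y <= j.+1)).
have H4 : \sum_y (((j.-1 <= D y) && (D y <= j.+1)) : nat) =
   #|[set y | D y == j.-1]| + #|S| + #|[set y | D y == j.+1]|.
  rewrite !card_sum -!big_split; apply: eq_bigr => y _; rewrite /S !inE /=; lia.
have H5 : \sum_y ((D y == j.-1) || (D y == j.+1)) * dS e S y =
   \sum_y \sum_x ((D y == j.-1) && (D x == j.-1.+1) && e y x) +
   \sum_y \sum_x ((D y == j.+1) && (D x == j) && e y x).
  rewrite -big_split; apply: eq_bigr => y _; rewrite /dS -big_split big_distrr.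
  apply: eq_bigr => x _; rewrite (prednK j0) inE /=; lia.
have H6 := @U_bound _ _ esym eirr c4 S (fun y => (D y == j.-1) || (D y == j.+1)).
have H7 : \sum_y (((D y == j.-1) || (D y == j.+1)) : nat) =
   #|[set y | D y == j.-1]| + #|[set y | D y == j.+1]|.
  rewrite !card_sum -!big_split; apply: eq_bigr => y _; rewrite !inE /=; lia.
have C1 := cut_up jd.
have C2 : 4 <= \sum_y \sum_x ((D y == j.-1) && (D x == j.-1.+1) && e y x).
  by apply: cut_dn; rewrite (prednK j0) ltnW.
have n1 := layer_ne (leq_trans (leq_pred j) (ltnW jd)).
have n2 := layer_ne jd.
have n0 : 0 < #|S| := layer_ne (ltnW jd).
rewrite /= in H3 H6; rewrite H4 in H3; rewrite H7 in H6; rewrite -H2 in H3; rewrite H5 in H6.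
have A9 := @arith9 #|S| (#|[set y | D y == j.-1]| + #|[set y | D y == j.+1]|); lia.
Qed.

Lemma start : #|[set y | D y == 0]| = 1 /\ 4 <= #|[set y | D y == 1]| /\ 2 * #|[set y | D y == 1]| <= #|[set y | D y == 2]|.
Proof.
have A1 y : e v y = (D y == 1).
  apply/idP/idP => [evy|/eqP Dy].
    have [h1 _] := Dedge evy; rewrite (gdist_refl econn) in h1.
    have : D y != 0 by apply/eqP => /(gdist0 econn) yv; move: evy; rewrite yv eirr.
    lia.
  have := gdist_pred econn (x:=v) (z:=y); rewrite Dy => /(_ isT) [z ezy Dz].
  have : D z = 0 by lia.
  by move=> /(gdist0 econn) zv; rewrite -zv.
have a0 : #|[set y | D y == 0]| = 1.
  rewrite -(cards1 v); apply: eq_card => y; rewrite !inE.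
  by apply/eqP/eqP => [/(gdist0 econn)//|->]; apply: (gdist_refl econn).
set S := [set y | D y == 1].
have a1 : 4 <= #|S|.
  rewrite card_sum; under eq_bigr => y _ do rewrite inE -A1.
  exact: deg4 v.
have dSv : dS e S v = #|S|.
  by rewrite /dS card_sum; apply: eq_bigr => x _; rewrite inE A1 andbb.
have P := pairs_bound esym eirr c4 S.
rewrite (bigD1 v) //= dSv in P.
have le1 y : y != v -> dS e S y <= 1.
  move=> yv; have C0 : 'C(dS e S y, 2) = 0.
    move: P; rewrite (bigD1 y) //=; lia.
  rewrite leqNgt; apply/negP => H.
  by have := bin_gt0 (dS e S y) 2; rewrite C0 ltnn H.
have supp y : y != v -> dS e S y <= ((D y == 1) || (D y == 2)).
  move=> yv; case: (boolP ((D y == 1) || (D y == 2))) => Hy; first exact: le1.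
  rewrite leqn0 /dS; apply/eqP; apply: big1 => x _; rewrite inE.
  case exy: (e y x); last by rewrite andbF.
  have [h1 h2] := Dedge exy.
  have : D y != 0 by apply/eqP => /(gdist0 econn) E; rewrite E eqxx in yv.
  lia.
have H1 : 4 * #|S| <= \sum_y dS e S y by apply: deg_ge => // x _; apply: deg4.
rewrite (bigD1 v) //= dSv in H1.
have H2 : \sum_(y | y != v) dS e S y <= #|S| + #|[set y | D y == 2]|.
  apply: (@leq_trans (\sum_(y | y != v) ((D y == 1) || (D y == 2) : nat))).
    by apply: leq_sum => y yv; apply: supp.
  apply: (@leq_trans (\sum_y ((D y == 1) || (D y == 2) : nat))).
    by rewrite [X in _ <= X](bigD1 v) //= leq_addl.
  rewrite /S !card_sum -big_split; apply: leq_sum => y _; rewrite !inE /=; lia.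
split; first exact: a0; split; first exact: a1; lia.
Qed.

Lemma FS m : #|[set y | D y < m.+1]| = #|[set y | D y < m]| + #|[set y | D y == m]|.
Proof. by rewrite !card_sum -big_split; apply: eq_bigr => y _; rewrite !inE /=; lia. Qed.

Lemma F0 : #|[set y | D y < 0]| = 0.
Proof. by rewrite card_sum big1 // => y _; rewrite inE. Qed.

Lemma total : 3 * d.+1 <= #|T|.
Proof.
have [a0 [a1 a2]] := start.
have d2 : 2 <= d.
  have : 0 < #|[set y | D y == 2]| by lia.
  by case/card_gt0P => y; rewrite inE => /eqP <-.
have Q k : forall r, r < 3 -> 3 * k + 3 + r <= d.+1 ->
    3 * (3 * k + 3 + r) <= #|[set y | D y < 3 * k + 3 + r]|.
  elim: k => [|k IH] r r3 rd.
    rewrite !muln0 !add0n.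
    have n3 : 3 <= d -> 0 < #|[set y | D y == 3]| by apply: layer_ne.
    have n4 : 4 <= d -> 0 < #|[set y | D y == 4]| by apply: layer_ne.
    case: r r3 rd => [|[|[|r]]] // _ rd; rewrite !FS F0; lia.
  have -> : 3 * k.+1 + 3 + r = (3 * k + 3 + r).+3 by lia.
  rewrite !FS.
  have M := @middle (3 * k + 3 + r).+1 isT ltac:(lia).
  have := IH r r3 ltac:(lia).
  rewrite /= in M; lia.
have := Q ((d.+1 - 3) %/ 3) ((d.+1 - 3) %% 3) ltac:(by rewrite ltn_pmod).
have E : 3 * ((d.+1 - 3) %/ 3) + 3 + (d.+1 - 3) %% 3 = d.+1.
  lia.
rewrite E => /(_ (leqnn _)) H; apply: (leq_trans H); exact: max_card.
Qed.
End Main.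

Unset Implicit Arguments.
From mathcomp Require Import lra.
Theorem theorem2 (T : finType) (e : rel T) :
  symmetric e -> irreflexive e -> gconnected e -> C4_free e ->
  4 <= edge_connectivity e ->
  ((diameter e)%:R <= ((#|T|)%:R - 3) / 3 :> rat)%R.
Proof.
move=> esym eirr econn c4 lam.
have n0 : 0 < #|T| by case/andP: econn.
have [v Hv] := @bigop.eq_bigmax T (fun x => \max_y gdist e x y) n0.
have [w Hw] := @bigop.eq_bigmax T (fun y => gdist e v y) n0.
have dE : diameter e = gdist e v w by rewrite /diameter Hv Hw.
set d := diameter e in dE *.
have Dle y : gdist e v y <= d by rewrite dE -Hw; apply: (@bigop.leq_bigmax T (fun y => gdist e v y)).
have Lne j : j <= d -> exists y, gdist e v y = j.
  have K k : k <= d -> exists y, gdist e v y = d - k.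
    elim: k => [|k IH] kd; first by exists w; rewrite subn0 dE.
    have [y Dy] := IH (ltnW kd).
    have : 0 < gdist e v y by lia.
    by case/(gdist_pred econn) => z _ Dz; exists z; lia.
  by move=> jd; have := K (d - j) (leq_subr _ _); rewrite subKn.
have H := total esym eirr econn c4 lam Dle Lne.
have H' : ((3 * d.+1)%:R <= (#|T|)%:R :> rat)%R by rewrite ler_nat.
rewrite natrM -natr1 in H'.
lra.
Qed.
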